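(* Consider the Online Submodular Bipartite Matching problem (defined in the context) with integral arrival rates, i.e. $p_v = 1/T$ and $r_v = T p_v = 1$ for every $v \in V$. There exists an online algorithm which achieves a competitive ratio of at least $\frac{1}{2}\left(1-e^{-1/2}\right)\left(1-\frac{1}{e}\right)$ for this problem.
   Context: Online Submodular Bipartite Matching (OSBM): we are given a bipartite graph $G=(U,V,E)$ with $m=|E|$, where $U$ are offline vertices and $V$ are online vertex types, a finite known horizon $T$, and a known probability distribution $\{p_v\}_{v\in V}$ with $\sum_{v} p_v \le 1$. In each round $t\in\{1,\dots,T\}$, independently across rounds, at most one vertex of $V$ arrives: $v$ arrives with probability $p_v$ (and none arrives with probability $1-\sum_v p_v$). Let $r_v = T p_v \in [0,1]$. When $v$ arrives, the algorithm must immediately and irrevocably either reject it or match it to a neighbor $u\in U$ (via an edge $(u,v)\in E$) that is still available; each $u\in U$ has unit capacity and becomes unavailable once matched (a vertex of $V$ may be matched several times if it arrives several times). We are given value-oracle access to a non-negative monotone submodular set function $f:2^E\to\mathbb{R}_{\ge 0}$ with $f(\emptyset)=0$; the goal is to maximize $\mathbb{E}[f(\mathcal{M})]$ where $\mathcal{M}$ is the final set of matched edges (randomness over arrivals and the algorithm). For an arrival sequence $S$, $\mathrm{OPT}(S)$ is the maximum of $f$ over all feasible (hindsight) matchings for the arrivals in $S$, and $\mathbb{E}[\mathrm{OPT}]$ is its expectation over $S$. The competitive ratio of an algorithm ALG is $\min$ over instances (graph, function, distribution) of $\mathbb{E}[\mathrm{ALG}]/\mathbb{E}[\mathrm{OPT}]$.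 *)

(* Defs.v *)
From HB Require Import structures.
From mathcomp Require Import all_boot all_order all_algebra.
From mathcomp Require Import reals sequences exp.

Set Implicit Arguments.
Unset Strict Implicit.
Unset Printing Implicit Defensive.

Import Order.TTheory GRing.Theory Num.Theory.
Local Open Scope ring_scope.

Section OSBM.
Variables (R : realType) (U V : finType).

(* An arrival sequence over horizon T: round t sees [Some v] (v arrives) or
   [None] (no arrival). *)
Definition arrivals (T : nat) := {ffun 'I_T -> option V}.

Definition arr_prob (T : nat) (a : option V) : R :=
  match a with
  | None => 1 - #|V|%:R / T%:R
  | Some _ => 1 / T%:R
  end.

Definition seq_prob (T : nat) (S : arrivals T) : R :=
  \prod_(t < T) arr_prob T (S t).

Definition feasible_matching (E : {set U * V}) (T : nat) (S : arrivals T)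
    (M : {set U * V}) : bool :=
  [&& M \subset E,
      [forall u : U, #|[set e in M | e.1 == u]| <= 1]%N &
      [forall v : V, #|[set e in M | e.2 == v]| <= #|[set t | S t == Some v]|]%N].

Definition OPT (E : {set U * V}) (f : {set U * V} -> R) (T : nat)
    (S : arrivals T) : R :=
  \big[Num.max/0]_(M : {set U * V} | feasible_matching E S M) f M.

Definition expected_OPT (E : {set U * V}) (f : {set U * V} -> R) (T : nat) : R :=
  \sum_(S : arrivals T) seq_prob S * OPT E f S.

(* A (randomized, behavioral) online algorithm: given the history of past
   rounds (arrival, decision) and the currently arriving v, a probability
   distribution over decisions: [None] = reject, [Some u] = match to u. *)
Definition history := seq (option V * option U).
Definition online_policy := history -> V -> {ffun option U -> R}.

Definition valid_policy (pol : online_policy) : Prop :=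
  forall (h : history) (v : V),
    (forall o, 0 <= pol h v o) /\ \sum_(o : option U) pol h v o = 1.

Definition matched (M : {set U * V}) (u : U) : bool := [exists v : V, (u, v) \in M].

(* Effect of a decision: the edge (u,v) is added iff it is an edge of G and u
   is still available; an infeasible choice amounts to a rejection. *)
Definition apply_decision (E : {set U * V}) (M : {set U * V}) (v : V)
    (o : option U) : {set U * V} :=
  match o with
  | Some u => if ((u, v) \in E) && ~~ matched M u then (u, v) |: M else M
  | None => M
  end.

Fixpoint alg_value (E : {set U * V}) (f : {set U * V} -> R) (T : nat)
    (pol : online_policy) (k : nat) (h : history) (M : {set U * V}) : R :=
  match k with
  | 0 => f M
  | k'.+1 =>
      \sum_(a : option V) arr_prob T a *
        match a with
        | None => alg_value E f T pol k' (rcons h (None, None)) M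
        | Some v => \sum_(o : option U)
                      pol h v o * alg_value E f T pol k' (rcons h (Some v, o))
                                            (apply_decision E M v o)
        end
  end.

Definition expected_ALG (E : {set U * V}) (f : {set U * V} -> R) (T : nat)
    (pol : online_policy) : R :=
  alg_value E f T pol T [::] set0.

Definition monotone_submodular_on (E : {set U * V}) (f : {set U * V} -> R) : Prop :=
  [/\ f set0 = 0,
      (forall A : {set U * V}, A \subset E -> 0 <= f A),
      (forall A B : {set U * V}, A \subset B -> B \subset E -> f A <= f B) &
      (forall A B : {set U * V}, A \subset E -> B \subset E -> f (A :|: B) + f (A :&: B) <= f A + f B)].

End OSBM.

Definition osbm_ratio (R : realType) : R :=
  (1 / 2) * (1 - expR (- (1 / 2))) * (1 - expR (-1)).

(* Main.v *)
Require Import Defs.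
From HB Require Import structures.
From mathcomp Require Import all_boot all_order all_algebra.
From mathcomp Require Import reals sequences exp.
From mathcomp Require Import ring lra.
Import Order.TTheory GRing.Theory Num.Theory.
Local Open Scope ring_scope.
Set Implicit Arguments.
Unset Strict Implicit.
Unset Printing Implicit Defensive.

Lemma sum_option (R : realType) (V : finType) (F : option V -> R) :
  \sum_(a : option V) F a = F None + \sum_(v : V) F (Some v).
Proof.
rewrite (bigD1 None) //=; congr (_ + _).
rewrite (@reindex_omap _ _ _ _ _ Some id) /=; last by case.
by apply: eq_bigl => v; rewrite eqxx.
Qed.

Section Main.
Variables (R : realType) (U V : finType) (E : {set U * V}) (T : nat)
  (f : {set U * V} -> R).
Hypotheses (T0 : (0 < T)%N) (VT : (#|V| <= T)%N)
  (fs : monotone_submodular_on E f).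

Local Notation arr := (@arr_prob R V T).

Lemma Tpos : 0 < T%:R :> R.
Proof. by rewrite ltr0n. Qed.

Lemma arr_ge0 a : 0 <= arr a.
Proof.
case: a => [v|] /=; first by rewrite divr_ge0 // ler0n.
rewrite subr_ge0 ler_pdivrMr ?Tpos // mul1r ler_nat //.
Qed.

Lemma arr_sum : \sum_a arr a = 1.
Proof.
rewrite sum_option /= sumr_const cardT -cardE.
by rewrite -[1 / T%:R *+ _]mulr_natr mul1r mulrC subrK.
Qed.
Local Notation sp := (@seq_prob R V T).

Lemma sp_ge0 S : 0 <= sp S.
Proof. by apply: prodr_ge0 => t _; apply: arr_ge0. Qed.

Lemma sp_sum : \sum_(S : arrivals V T) sp S = 1.
Proof.
rewrite /seq_prob /arrivals -(bigA_distr_bigA (fun (t : 'I_T) a => arr a)) /=.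
by rewrite big1 // => t _; rewrite arr_sum.
Qed.

Lemma card_sum (I : finType) (P : pred I) :
  (#|[set t | P t]|)%:R = \sum_t (P t)%:R :> R.
Proof.
rewrite -sum1_card natr_sum big_mkcond /=.
by apply: eq_bigr => t _; rewrite inE; case: (P t).
Qed.

Lemma count_exp v :
  \sum_(S : arrivals V T) sp S * (#|[set t | S t == Some v]|)%:R = 1.
Proof.
under eq_bigr => S _ do rewrite card_sum mulr_sumr.
rewrite exchange_big /=.
have H : forall t : 'I_T, \sum_(S : arrivals V T) sp S * (S t == Some v)%:R = 1 / T%:R.
  move=> t.
  pose G (s : 'I_T) (a : option V) := if s == t then arr a * (a == Some v)%:R else arr a.
  have -> : \sum_(S : arrivals V T) sp S * (S t == Some v)%:R =
     \sum_(S : {ffun 'I_T -> option V}) \prod_s G s (S s).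
    apply: eq_bigr => S _; rewrite /seq_prob (bigD1 t) //= [in RHS](bigD1 t) //= /G eqxx.
    rewrite mulrAC; congr (_ * _); apply: eq_bigr => s /negbTE ->; done.
  rewrite -(bigA_distr_bigA G) /= (bigD1 t) //=.
  rewrite [X in _ * X]big1; last by move=> s st; rewrite /G (negbTE st) arr_sum.
  rewrite mulr1 /G eqxx sum_option /= mulr0 add0r (bigD1 v) //= eqxx mulr1 big1 ?addr0 //.
  by move=> w wv; rewrite (inj_eq (@Some_inj _)) (negbTE wv) mulr0.
rewrite (eq_bigr (fun=> 1 / T%:R)); last by move=> t _; exact: H.
rewrite sumr_const card_ord -[_ *+ T]mulr_natr mul1r mulVf //.
by rewrite pnatr_eq0 -lt0n.
Qed.

Lemma f_ge0 (M : {set U * V}) : M \subset E -> 0 <= f M.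
Proof. by case: fs => _ H _ _; apply: H. Qed.

Lemma f_mono (A B : {set U * V}) : A \subset B -> B \subset E -> f A <= f B.
Proof. by case: fs => _ _ H _; apply: H. Qed.

Lemma f0 : f set0 = 0.
Proof. by case: fs. Qed.

Lemma feas_sub (S : arrivals V T) (M : {set U * V}) : feasible_matching E S M -> M \subset E.
Proof. by case/and3P. Qed.

Lemma opt_ex (S : arrivals V T) :
  {M | feasible_matching E S M & OPT E f S = f M}.
Proof.
have F0 : feasible_matching E S set0.
  apply/and3P; split; first exact: sub0set.
    by apply/forallP => u; rewrite (_ : [set e in set0 | e.1 == u] = set0) ?cards0 //; apply/setP => e; rewrite !inE.
  by apply/forallP => v; rewrite (_ : [set e in set0 | e.2 == v] = set0) ?cards0 //; apply/setP => e; rewrite !inE.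
case: (@Order.TotalTheory.eq_bigmax _ _ _ 0 set0 (fun M => feasible_matching E S M) f F0).
  by move=> M /feas_sub; apply: f_ge0.
by move=> M H1 H2; exists M.
Qed.

Definition Mopt (S : arrivals V T) := s2val (opt_ex S).
Lemma Mopt_feas S : feasible_matching E S (Mopt S).
Proof. by rewrite /Mopt; case: (opt_ex S). Qed.
Lemma Mopt_val S : OPT E f S = f (Mopt S).
Proof. by rewrite /Mopt; case: (opt_ex S). Qed.
Lemma Mopt_sub S : Mopt S \subset E.
Proof. exact: feas_sub (Mopt_feas S). Qed.

Definition x (e : U * V) : R := \sum_(S : arrivals V T) sp S * (e \in Mopt S)%:R.

Lemma x_ge0 e : 0 <= x e.
Proof. by apply: sumr_ge0 => S _; rewrite mulr_ge0 ?sp_ge0 ?ler0n. Qed.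

Lemma x_E e : e \notin E -> x e = 0.
Proof.
move=> eE; rewrite /x big1 // => S _.
by rewrite (_ : (e \in Mopt S) = false) ?mulr0 //; apply: contraNF eE; apply: (subsetP (Mopt_sub S)).
Qed.

Lemma sum_in_card (M : {set U * V}) (Q : pred (U * V)) :
  \sum_(e | Q e) ((e \in M) : nat)%:R = (#|[set e in M | Q e]|)%:R :> R.
Proof.
rewrite card_sum big_mkcond /=; apply: eq_bigr => e _.
by case: (Q e); case: (e \in M).
Qed.

Lemma x_v v : \sum_(e | e.2 == v) x e <= 1.
Proof.
rewrite /x exchange_big /= -[X in _ <= X](count_exp v); apply: ler_sum => S _.
rewrite -mulr_sumr ler_wpM2l ?sp_ge0 // sum_in_card ler_nat.
by case/and3P: (Mopt_feas S) => _ _ /forallP /(_ v).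
Qed.

Lemma x_u u : \sum_(e | e.1 == u) x e <= 1.
Proof.
rewrite /x exchange_big /= -[X in _ <= X]sp_sum; apply: ler_sum => S _.
rewrite -mulr_sumr -[X in _ <= X]mulr1 ler_wpM2l ?sp_ge0 // sum_in_card.
rewrite -[X in _ <= X]/(1%:R) ler_nat.
by case/and3P: (Mopt_feas S) => _ /forallP /(_ u).
Qed.

Lemma x_tot : \sum_e x e <= #|V|%:R.
Proof.
rewrite (partition_big (fun e : U * V => e.2) xpredT) //=.
rewrite -sum1_card natr_sum; apply: ler_sum => v _; exact: x_v.
Qed.

Lemma f_sub (A B : {set U * V}) : A \subset E -> B \subset E ->
  f (A :|: B) + f (A :&: B) <= f A + f B.
Proof. by case: fs => _ _ _ H; apply: H. Qed.

Lemma DR (A P : {set U * V}) e : A \subset P -> P \subset E -> e \in E ->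
  f (e |: P) - f P <= f (e |: A) - f A.
Proof.
move=> AP PE eE.
have AE : A \subset E by apply: subset_trans AP PE.
have XE : e |: A \subset E by rewrite subUset sub1set eE.
have H := f_sub XE PE.
rewrite (_ : (e |: A) :|: P = e |: P) in H; last by rewrite -setUA (setUidPr AP).
have : f A <= f ((e |: A) :&: P).
  apply: f_mono; first by rewrite subsetI subsetUr AP.
  by apply: subset_trans (subsetIl _ _) XE.
move: H; lra.
Qed.

Lemma sum_marg (A : {set U * V}) (s : seq (U * V)) :
  A \subset E -> {subset s <= E} ->
  f ([set:: s] :|: A) - f A <= \sum_(e <- s) (f (e |: A) - f A).
Proof.
move=> AE; elim: s => [|e s IH] sE.
  by rewrite big_nil (_ : [set:: [::]] = set0) ?set0U ?subrr //; apply/setP => z; rewrite !inE.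
rewrite big_cons.
have eE : e \in E by apply: sE; rewrite inE eqxx.
have sE' : {subset s <= E} by move=> z zs; apply: sE; rewrite inE zs orbT.
have BE : [set:: s] :|: A \subset E.
  by rewrite subUset AE andbT; apply/subsetP => z; rewrite inE; apply: sE'.
have -> : [set:: e :: s] :|: A = e |: ([set:: s] :|: A).
  by apply/setP => z; rewrite !inE orbA.
have := DR (subsetUr [set:: s] A) BE eE.
have := IH sE'.
lra.
Qed.

Definition EOPT := expected_OPT E f T.

Lemma key (A : {set U * V}) : A \subset E ->
  EOPT - f A <= \sum_e x e * (f (e |: A) - f A).
Proof.
move=> AE.
rewrite /EOPT /expected_OPT.
have -> : \sum_e x e * (f (e |: A) - f A) =
   \sum_(S : arrivals V T) sp S * \sum_(e in Mopt S) (f (e |: A) - f A).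
  rewrite /x; under eq_bigr => e _ do rewrite mulr_suml.
  rewrite exchange_big /=; apply: eq_bigr => S _.
  rewrite mulr_sumr [RHS]big_mkcond /=; apply: eq_bigr => e _.
  by case: (e \in Mopt S); rewrite ?mulr1 ?mulr0 ?mul0r.
rewrite -[X in _ - X]mul1r -sp_sum mulr_suml -sumrB.
apply: ler_sum => S _; rewrite -mulrBr ler_wpM2l ?sp_ge0 // Mopt_val.
apply: (le_trans _ (le_trans (sum_marg (s := enum (Mopt S)) AE _) _)).
- rewrite lerD2r set_enum; apply: f_mono; first exact: subsetUl.
  by rewrite subUset AE Mopt_sub.
- by move=> z; rewrite mem_enum; apply: (subsetP (Mopt_sub S)).
- rewrite big_enum_cond /= (eq_bigl (fun i => i \in Mopt S)) // => i; by rewrite andbT.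
Qed.

Lemma sum_snd (F : U * V -> R) v : \sum_(e | e.2 == v) F e = \sum_u F (u, v).
Proof.
have -> : \sum_(e | e.2 == v) F e = \sum_(p | xpredT p.1 && (p.2 == v)) F (p.1, p.2).
  by apply: eq_big => -[u w].
rewrite -(pair_big xpredT (fun w => w == v) (fun u w => F (u, w))) /=.
by apply: eq_bigr => u _; rewrite big_pred1_eq.
Qed.

Lemma sum_fst (F : U * V -> R) u : \sum_(e | e.1 == u) F e = \sum_v F (u, v).
Proof.
have -> : \sum_(e | e.1 == u) F e = \sum_(p | (p.1 == u) && xpredT p.2) F (p.1, p.2).
  by apply: eq_big => -[w v] //=; rewrite andbT.
rewrite -(pair_big (fun w => w == u) xpredT (fun w v => F (w, v))) /=.
by rewrite big_pred1_eq.
Qed.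

Lemma xv_le1 v : \sum_u x (u, v) <= 1.
Proof. by rewrite -sum_snd; apply: x_v. Qed.

Definition pol : online_policy R U V := fun h v =>
  [ffun o : option U => match o with
                       | Some u => (1/2) * x (u, v)
                       | None => 1 - (1/2) * \sum_u x (u, v) end].

Lemma pol_valid : valid_policy pol.
Proof.
move=> h v; split.
  case=> [u|]; rewrite /pol ffunE.
    by apply: mulr_ge0; [lra | apply: x_ge0].
  by have := xv_le1 v; lra.
rewrite sum_option /pol !ffunE /=.
rewrite [X in _ + X](eq_bigr (fun u => 1/2 * x (u, v))); last by move=> u _; rewrite ffunE.
by rewrite -mulr_sumr subrK.
Qed.

Local Notation app M e := (apply_decision E M e.2 (Some e.1)).

Fixpoint W (k : nat) (M : {set U * V}) : R :=
  match k with
  | 0 => f M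
  | k'.+1 =>
      \sum_(a : option V) arr a *
        match a with
        | None => W k' M
        | Some v => \sum_(o : option U) pol [::] v o * W k' (apply_decision E M v o)
        end
  end.

Lemma alg_W k h M : alg_value E f T pol k h M = W k M.
Proof.
elim: k h M => [//|k IH] h M /=.
apply: eq_bigr => -[v|] _; last by rewrite IH.
congr (_ * _); apply: eq_bigr => o _; by rewrite IH.
Qed.

Definition beta : R := 1 / (2 * T%:R).
Definition pi (e : U * V) : R := beta * x e.
Definition pi0 : R := 1 - \sum_e pi e.

Lemma polS h v u : pol h v (Some u) = 1/2 * x (u, v).
Proof. by rewrite /pol ffunE. Qed.
Lemma polN h v : pol h v None = 1 - 1/2 * \sum_u x (u, v).
Proof. by rewrite /pol ffunE. Qed.

Lemma W_step k M :
  W k.+1 M = pi0 * W k M + \sum_e pi e * W k (app M e).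
Proof.
rewrite /= sum_option /=.
rewrite (eq_bigr (fun v => (1 / T%:R) * (1 - 1 / 2 * \sum_u x (u, v)) * W k M +
   \sum_u pi (u, v) * W k (apply_decision E M v (Some u)))); last first.
  move=> v _; rewrite sum_option polN /= mulrDr mulrA; congr (_ + _).
  rewrite mulr_sumr; apply: eq_bigr => u _.
  rewrite polS /pi /beta mulrA; congr (_ * _); field; by rewrite pnatr_eq0 -lt0n.
rewrite big_split /= -mulr_suml addrA -mulrDl.
rewrite exchange_big /= (pair_big xpredT xpredT (fun u v => pi (u, v) * W k (apply_decision E M v (Some u)))) /=.
congr (_ * _ + _); last by apply: eq_bigr => -[u v].
rewrite /pi0 /pi.
have Hx : \sum_e x e = \sum_v \sum_u x (u, v).
  rewrite (partition_big (fun e : U * V => e.2) xpredT) //=.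
  by apply: eq_bigr => v _; rewrite sum_snd.
have -> : \sum_v 1 / T%:R * (1 - 1 / 2 * \sum_u x (u, v)) =
    #|V|%:R / T%:R - beta * \sum_v \sum_u x (u, v).
  rewrite (eq_bigr (fun v => 1 / T%:R - beta * \sum_u x (u, v))); last first.
    by move=> v _; rewrite /beta; field; rewrite pnatr_eq0 -lt0n.
  rewrite sumrB sumr_const -mulr_sumr cardT -cardE -[_ *+ _]mulr_natr.
  by rewrite mul1r mulrC.
by rewrite -mulr_sumr Hx; ring.
Qed.

Lemma Tne0 : T%:R != 0 :> R.
Proof. by rewrite pnatr_eq0 -lt0n. Qed.

Lemma beta_gt0 : 0 < beta.
Proof. by rewrite /beta divr_gt0 // mulr_gt0 // Tpos. Qed.

Lemma beta_T : beta * T%:R = 1/2.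
Proof. by rewrite /beta; field; rewrite Tne0. Qed.

Lemma T_ge1 : 1 <= T%:R :> R.
Proof. by rewrite -[X in X <= _]/(1%:R) ler_nat. Qed.

Lemma beta_le : beta <= 1/2.
Proof.
have := beta_T; have := T_ge1; have := beta_gt0; nra.
Qed.

Lemma pi_ge0 e : 0 <= pi e.
Proof. by rewrite /pi mulr_ge0 ?x_ge0 // ltW // beta_gt0. Qed.

Lemma pi_E e : e \notin E -> pi e = 0.
Proof. by move=> /x_E; rewrite /pi => ->; rewrite mulr0. Qed.

Lemma sum_pi_le : \sum_e pi e <= 1/2.
Proof.
rewrite /pi -mulr_sumr -beta_T ler_wpM2l ?(ltW beta_gt0) //.
apply: le_trans x_tot _; by rewrite ler_nat.
Qed.

Lemma pi0_ge0 : 0 <= pi0.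
Proof. have := sum_pi_le; rewrite /pi0; lra. Qed.

Lemma sum_pi_u u : \sum_(e | e.1 == u) pi e <= beta.
Proof.
rewrite /pi -mulr_sumr -[X in _ <= X]mulr1 ler_wpM2l ?(ltW beta_gt0) //; exact: x_u.
Qed.

Definition touched (P : {set U * V}) (u : U) : bool := [exists v, (u, v) \in P].
Definition bR (b : bool) : R := (b : nat)%:R.

Lemma bR_ge0 b : 0 <= bR b.
Proof. by case: b; rewrite /bR ?ler01 ?lexx. Qed.

Lemma touchedU (e : U * V) P u : touched (e |: P) u = (e.1 == u) || touched P u.
Proof.
case: e => a b /=; apply/existsP/orP.
  case=> v; rewrite in_setU1 => /orP [/eqP [-> _]|H]; first by left.
  by right; apply/existsP; exists v.
case=> [/eqP <-|/existsP [v H]]; first by exists b; rewrite in_setU1 eqxx.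
by exists v; rewrite in_setU1 H orbT.
Qed.

Definition g (e : U * V) (P : {set U * V}) : R := f (e |: P) - f P.

Definition Ku (u : U) (h : {set U * V} -> R) : {set U * V} -> R :=
  fun P => pi0 * h P + \sum_e bR (e.1 != u) * pi e * h (e |: P).

Lemma KuE u h P : Ku u h P = pi0 * h P + \sum_e bR (e.1 != u) * pi e * h (e |: P).
Proof. by []. Qed.

Definition Sj (j : nat) (P : {set U * V}) : R :=
  \sum_e pi e * bR (~~ touched P e.1) * iter j (Ku e.1) (g e) P.

Lemma Sj_succ j P : Sj j.+1 P = pi0 * Sj j P + \sum_e' pi e' * Sj j (e' |: P).
Proof.
rewrite /Sj.
under eq_bigr => e _ do rewrite iterS KuE mulrDr.
rewrite big_split /=; congr (_ + _).
  by rewrite mulr_sumr; apply: eq_bigr => e _; ring.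
under eq_bigr => e _ do rewrite mulr_sumr.
rewrite exchange_big /=; apply: eq_bigr => e' _.
rewrite mulr_sumr; apply: eq_bigr => e _.
rewrite touchedU negb_or.
have -> : bR (~~ (e'.1 == e.1) && ~~ touched P e.1) = bR (e'.1 != e.1) * bR (~~ touched P e.1).
  by rewrite /bR; case: (e'.1 == e.1); case: (touched P e.1); rewrite /= ?mulr0 ?mul0r ?mulr1.
ring.
Qed.

Lemma matched_app (M : {set U * V}) (e : U * V) u :
  matched (app M e) u -> (e.1 == u) || matched M u.
Proof.
rewrite /apply_decision; case: ifP => _; last by move=> ->; rewrite orbT.
case/existsP => v; rewrite in_setU1 => /orP [/eqP [-> _]|H]; first by rewrite eqxx.
by rewrite orbC; apply/orP; left; apply/existsP; exists v.
Qed.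

Lemma app_sub (M : {set U * V}) (e : U * V) : M \subset app M e /\ app M e \subset e |: M.
Proof.
rewrite /apply_decision -surjective_pairing; case: ifP => _; split; rewrite ?subsetUr //.
Qed.

Lemma alg_lb k : forall M P : {set U * V}, M \subset P -> P \subset E ->
  (forall u, matched M u -> touched P u) ->
  f M + \sum_(j < k) Sj j P <= W k M.
Proof.
elim: k => [|k IH] M P MP PE inv; first by rewrite big_ord0 addr0.
have ME : M \subset E by apply: subset_trans MP PE.
rewrite W_step big_ord_recl.
rewrite (eq_bigr (fun j : 'I_k => pi0 * Sj j P + \sum_e' pi e' * Sj j (e' |: P))); last first.
  by move=> j _; rewrite Sj_succ.
rewrite big_split -mulr_sumr.
have step e : pi e * (f (app M e) + \sum_(j < k) Sj j (e |: P)) <= pi e * W k (app M e).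
  case eE: (e \in E); last by rewrite pi_E ?eE // !mul0r.
  rewrite ler_wpM2l ?pi_ge0 //; apply: IH.
  - case: (app_sub M e) => _ H; apply: subset_trans H _; exact: setUS.
  - by rewrite subUset sub1set eE PE.
  - move=> u /matched_app /orP [/eqP <-|/inv H]; rewrite touchedU ?H ?orbT //.
    by rewrite eqxx.
have step0 := IH M P MP PE inv.
have gain : \sum_e pi e * bR (~~ touched P e.1) * g e P <=
            \sum_e pi e * (f (app M e) - f M).
  apply: ler_sum => e _.
  case eE: (e \in E); last by rewrite pi_E ?eE // !mul0r.
  case tP: (touched P e.1); rewrite /bR /=.
    rewrite mulr0 mul0r mulr_ge0 ?pi_ge0 // subr_ge0.
    case: (app_sub M e) => H1 H2; apply: f_mono H1 _.
    apply: subset_trans H2 _; by rewrite subUset sub1set eE ME.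
  rewrite mulr1 ler_wpM2l ?pi_ge0 //.
  have nm : ~~ matched M e.1 by apply/negP => /inv; rewrite tP.
  rewrite /apply_decision -surjective_pairing eE nm /=.
  by rewrite /g DR.
have E1 : Sj 0 P = \sum_e pi e * bR (~~ touched P e.1) * g e P by [].
have E2 : \sum_e pi e * W k (app M e) >=
   \sum_e pi e * f (app M e) + \sum_e pi e * \sum_(j < k) Sj j (e |: P).
  rewrite -big_split /=; apply: ler_sum => e _.
  by apply: le_trans (step e); rewrite mulrDr.
have E3 : \sum_e pi e * (f (app M e) - f M) = \sum_e pi e * f (app M e) - \sum_e pi e * f M.
  by rewrite -sumrB; apply: eq_bigr => e _; rewrite mulrBr.
have E4 : \sum_e pi e * f M = (1 - pi0) * f M by rewrite -mulr_suml /pi0; congr (_ * _); ring.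
have E5 : \sum_(i < k) \sum_e pi e * Sj i (e |: P) = \sum_e pi e * \sum_(j < k) Sj j (e |: P).
  by rewrite exchange_big /=; apply: eq_bigr => e _; rewrite mulr_sumr.
have := pi0_ge0.
have : pi0 * (f M + \sum_(j < k) Sj j P) <= pi0 * W k M by rewrite ler_wpM2l ?pi0_ge0.
rewrite E1 E5.
move: gain E2; rewrite E3 E4.
move=> h1 h2 h3 h4; rewrite /= in h1 h2 h3 h4 *. nra.
Qed.

Definition rho (e : U * V) : R := pi e / (1 - beta).
Definition rho0 : R := 1 - \sum_e rho e.

Definition K (h : {set U * V} -> R) : {set U * V} -> R :=
  fun P => rho0 * h P + \sum_e rho e * h (e |: P).
Lemma KE h P : K h P = rho0 * h P + \sum_e rho e * h (e |: P).
Proof. by []. Qed.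

Lemma omb_gt0 : 0 < 1 - beta.
Proof. have := beta_le; lra. Qed.

Lemma rho_ge0 e : 0 <= rho e.
Proof. by rewrite /rho divr_ge0 ?pi_ge0 // ltW // omb_gt0. Qed.

Lemma rho_E e : e \notin E -> rho e = 0.
Proof. by move=> /pi_E; rewrite /rho => ->; rewrite mul0r. Qed.

Lemma rho0_ge0 : 0 <= rho0.
Proof.
rewrite /rho0 /rho -mulr_suml subr_ge0 ler_pdivrMr ?omb_gt0 // mul1r.
have := sum_pi_le; have := beta_le; lra.
Qed.

Lemma rho_sum : rho0 + \sum_e rho e = 1.
Proof. by rewrite /rho0 subrK. Qed.

Definition antiE (h : {set U * V} -> R) :=
  forall P Q : {set U * V}, P \subset Q -> Q \subset E -> h Q <= h P.
Definition nnE (h : {set U * V} -> R) := forall P : {set U * V}, P \subset E -> 0 <= h P.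

Lemma addE (P : {set U * V}) e : P \subset E -> e \in E -> e |: P \subset E.
Proof. by move=> PE eE; rewrite subUset sub1set eE PE. Qed.

Lemma Phi_props j h : antiE h -> nnE h -> antiE (iter j K h) /\ nnE (iter j K h).
Proof.
move=> ah nh; elim: j => [//|j [aj nj]]; split.
  move=> P Q PQ QE; rewrite iterS !KE.
  apply: lerD; first by rewrite ler_wpM2l ?rho0_ge0 // aj.
  apply: ler_sum => e _; case eE: (e \in E); last by rewrite rho_E ?eE // !mul0r.
  by rewrite ler_wpM2l ?rho_ge0 // aj ?setUS // addE.
move=> P PE; rewrite iterS KE; apply: addr_ge0.
  by rewrite mulr_ge0 ?rho0_ge0 // nj.
apply: sumr_ge0 => e _; case eE: (e \in E); last by rewrite rho_E ?eE // !mul0r.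
by rewrite mulr_ge0 ?rho_ge0 // nj // addE.
Qed.

Lemma Phi_mono j (h1 h2 : {set U * V} -> R) : (forall P : {set U * V}, P \subset E -> h1 P <= h2 P) ->
  forall P : {set U * V}, P \subset E -> iter j K h1 P <= iter j K h2 P.
Proof.
move=> H; elim: j => [//|j IH] P PE; rewrite !iterS !KE.
apply: lerD; first by rewrite ler_wpM2l ?rho0_ge0 // IH.
apply: ler_sum => e _; case eE: (e \in E); last by rewrite rho_E ?eE // !mul0r.
by rewrite ler_wpM2l ?rho_ge0 // IH // addE.
Qed.

Lemma Phi_aff j c a h P :
  iter j K (fun Q => c + a * h Q) P = c + a * iter j K h P.
Proof.
elim: j P => [//|j IH] P; rewrite !iterS !KE IH.
under eq_bigr => e _ do rewrite IH.
rewrite (eq_bigr (fun e => rho e * c + a * (rho e * iter j K h (e |: P)))); last by move=> e _; ring.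
rewrite big_split /= -mulr_suml -mulr_sumr /rho0; ring.
Qed.

Lemma Phi_sum j (I : finType) (a : I -> R) (hs : I -> {set U * V} -> R) P :
  iter j K (fun Q => \sum_i a i * hs i Q) P = \sum_i a i * iter j K (hs i) P.
Proof.
elim: j P => [//|j IH] P; rewrite iterS KE IH.
under [X in _ + X]eq_bigr => e _ do rewrite IH.
under [RHS]eq_bigr => i _ do rewrite iterS KE mulrDr.
rewrite big_split /= mulr_sumr; congr (_ + _).
  by apply: eq_bigr => i _; ring.
under eq_bigr => e _ do rewrite mulr_sumr.
rewrite exchange_big /=; apply: eq_bigr => i _.
by rewrite mulr_sumr; apply: eq_bigr => e _; ring.
Qed.

Lemma Phi_dec j h : antiE h -> nnE h ->
  forall P : {set U * V}, P \subset E -> iter j.+1 K h P <= iter j K h P.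
Proof.
move=> ah nh P PE; have [aj nj] := Phi_props j ah nh.
rewrite iterS KE.
have : \sum_e rho e * iter j K h (e |: P) <= \sum_e rho e * iter j K h P.
  apply: ler_sum => e _; case eE: (e \in E); last by rewrite rho_E ?eE // !mul0r.
  by rewrite ler_wpM2l ?rho_ge0 // aj ?subsetUr // addE.
rewrite -mulr_suml.
have := rho_sum; nra.
Qed.

Lemma Phi_decT j n h : antiE h -> nnE h -> (j <= n)%N ->
  forall P : {set U * V}, P \subset E -> iter n K h P <= iter j K h P.
Proof.
move=> ah nh; elim: n => [|n IH]; first by rewrite leqn0 => /eqP ->.
rewrite leq_eqVlt => /orP [/eqP -> //|]; rewrite ltnS => jn P PE.
by apply: le_trans (Phi_dec n ah nh PE) (IH jn P PE).
Qed.

Lemma AvPhi u h : antiE h -> nnE h ->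
  forall j (P : {set U * V}), P \subset E ->
  (1 - beta) ^+ j * iter j K h P <= iter j (Ku u) h P.
Proof.
move=> ah nh; elim => [|j IH] P PE; first by rewrite expr0 mul1r.
have [aj nj] := Phi_props j ah nh.
rewrite iterS [in X in _ <= X]iterS KE KuE.
set Ph := iter j K h; set A := iter j (Ku u) h.
have L1 : pi0 * ((1 - beta) ^+ j * Ph P) <= pi0 * A P.
  by rewrite ler_wpM2l ?pi0_ge0 // IH.
have L2 : \sum_e bR (e.1 != u) * pi e * ((1 - beta) ^+ j * Ph (e |: P)) <=
          \sum_e bR (e.1 != u) * pi e * A (e |: P).
  apply: ler_sum => e _; case eE: (e \in E); last by rewrite pi_E ?eE // mulr0 !mul0r.
  apply: ler_wpM2l; [exact: mulr_ge0 (bR_ge0 _) (pi_ge0 e) | apply: IH; exact: addE].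
have S1 : \sum_e pi e * Ph (e |: P) =
   \sum_e bR (e.1 != u) * pi e * Ph (e |: P) + \sum_e bR (e.1 == u) * pi e * Ph (e |: P).
  rewrite -big_split /=; apply: eq_bigr => e _.
  by rewrite /bR; case: (e.1 == u); rewrite /= ?mul1r ?mul0r ?add0r ?addr0.
have S2 : \sum_e bR (e.1 == u) * pi e * Ph (e |: P) <= beta * Ph P.
  apply: (@le_trans _ _ (\sum_e bR (e.1 == u) * pi e * Ph P)).
    apply: ler_sum => e _; case eE: (e \in E); last by rewrite pi_E ?eE // mulr0 !mul0r.
    apply: ler_wpM2l; [exact: mulr_ge0 (bR_ge0 _) (pi_ge0 e) | apply: aj; [exact: subsetUr | exact: addE]].
  rewrite -mulr_suml ler_wpM2r ?nj //.
  apply: le_trans (sum_pi_u u); rewrite [X in _ <= X]big_mkcond /=.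
  by apply: ler_sum => e _; rewrite /bR; case: (e.1 == u); rewrite /= ?mul1r ?mul0r.
have S3 : (1 - beta) * (rho0 * Ph P + \sum_e rho e * Ph (e |: P)) =
    (pi0 - beta) * Ph P + \sum_e pi e * Ph (e |: P).
  rewrite mulrDr mulr_sumr /rho0 /pi0 /rho -mulr_suml.
  have nz : 1 - beta != 0 by rewrite gt_eqF // omb_gt0.
  congr (_ + _); first by field.
  by apply: eq_bigr => e _; field.
have S4 : \sum_e bR (e.1 != u) * pi e * ((1 - beta) ^+ j * Ph (e |: P)) =
    (1 - beta) ^+ j * \sum_e bR (e.1 != u) * pi e * Ph (e |: P).
  by rewrite mulr_sumr; apply: eq_bigr => e _; ring.
have pj : 0 <= (1 - beta) ^+ j by rewrite exprn_ge0 // ltW // omb_gt0.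
have key : (1 - beta) * (rho0 * Ph P + \sum_e rho e * Ph (e |: P)) <=
    pi0 * Ph P + \sum_e bR (e.1 != u) * pi e * Ph (e |: P).
  rewrite S3 S1; lra.
rewrite exprS -mulrA.
apply: le_trans (lerD L1 L2); rewrite S4 [X in X <= _]mulrCA.
apply: le_trans (ler_wpM2l pj key) _.
by rewrite le_eqVlt; apply/orP; left; apply/eqP; ring.
Qed.

Lemma g_anti e : e \in E -> antiE (g e).
Proof. by move=> eE P Q PQ QE; rewrite /g DR. Qed.

Lemma g_nn e : e \in E -> nnE (g e).
Proof.
by move=> eE P PE; rewrite /g subr_ge0; apply: f_mono; [exact: subsetUr | exact: addE].
Qed.

Lemma f_anti_helper : True. Proof. by []. Qed.

Lemma tele (F : nat -> R) n : \sum_(j < n) (F j.+1 - F j) = F n - F 0%N.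
Proof.
elim: n => [|n IH]; first by rewrite big_ord0 subrr.
by rewrite big_ord_recr /= IH; ring.
Qed.

Lemma geom n : \sum_(j < n) beta * (1 - beta) ^+ j = 1 - (1 - beta) ^+ n.
Proof.
elim: n => [|n IH]; first by rewrite big_ord0 expr0 subrr.
by rewrite big_ord_recr /= IH exprS; ring.
Qed.

Lemma bern n : 1 - n%:R * beta <= (1 - beta) ^+ n.
Proof.
elim: n => [|n IH]; first by rewrite expr0 mul0r subr0.
have h1 := omb_gt0; have h2 := beta_gt0.
rewrite exprS -natr1.
have : (1 - beta) * (1 - n%:R * beta) <= (1 - beta) * (1 - beta) ^+ n.
  by rewrite ler_wpM2l // ltW.
have : 0 <= n%:R * beta * beta by apply: mulr_ge0; [apply: mulr_ge0; [exact: ler0n | exact: ltW] | exact: ltW].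
nra.
Qed.

Lemma expo_up n : (1 - beta) ^+ n <= expR (- beta) ^+ n.
Proof.
elim: n => [|n IH]; first by rewrite !expr0.
rewrite !exprS; apply: ler_pM => //.
- exact: ltW omb_gt0.
- by rewrite exprn_ge0 // ltW // omb_gt0.
- by have := expR_ge1Dx (- beta); rewrite addrC.
Qed.

Definition aa : R := (1 - beta) ^+ T.

Lemma aa_bounds : 1/2 <= aa /\ aa <= expR (- (1/2)).
Proof.
split.
  by apply: le_trans (bern T); rewrite [T%:R * _]mulrC beta_T; lra.
apply: le_trans (expo_up T) _; rewrite -expRM_natr mulNr beta_T.
exact: lexx.
Qed.

Lemma EOPT_ge0 : 0 <= EOPT.
Proof.
apply: sumr_ge0 => S _; rewrite mulr_ge0 ?sp_ge0 // Mopt_val.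
exact: f_ge0 (Mopt_sub S).
Qed.

Lemma matched0 u : matched (set0 : {set U * V}) u = false.
Proof. by apply/existsP => -[v]; rewrite inE. Qed.

Lemma touched0 u : touched set0 u = false.
Proof. by apply/existsP => -[v]; rewrite inE. Qed.

Definition G : R :=
  \sum_(j < T) \sum_e pi e * ((1 - beta) ^+ j * iter j K (g e) set0).

Lemma W_ge_G : G <= W T set0.
Proof.
have := alg_lb T (sub0set set0) (sub0set E) (fun u => ltac:(by rewrite matched0)).
rewrite f0 add0r; apply: le_trans; apply: ler_sum => j _.
rewrite /Sj; apply: ler_sum => e _.
rewrite touched0 /bR /= mulr1.
case eE: (e \in E); last by rewrite pi_E ?eE // !mul0r.
apply: ler_wpM2l; first exact: pi_ge0.
by apply: AvPhi; [exact: g_anti | exact: g_nn | exact: sub0set].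
Qed.

Definition FF : R := iter T K f set0.

Lemma boundA : (1 - aa) * (EOPT - FF) <= G.
Proof.
have S1 : G >= \sum_(j < T) \sum_e pi e * ((1 - beta) ^+ j * iter T K (g e) set0).
  apply: ler_sum => j _; apply: ler_sum => e _.
  case eE: (e \in E); last by rewrite pi_E ?eE // !mul0r.
  apply: ler_wpM2l; first exact: pi_ge0.
  apply: ler_wpM2l; first by rewrite exprn_ge0 // ltW // omb_gt0.
  by apply: Phi_decT; [exact: g_anti | exact: g_nn | exact: ltnW | exact: sub0set].
have S2 : \sum_(j < T) \sum_e pi e * ((1 - beta) ^+ j * iter T K (g e) set0) =
   (1 - aa) * \sum_e x e * iter T K (g e) set0.
  rewrite /aa -geom mulr_suml; apply: eq_bigr => j _.
  rewrite mulr_sumr; apply: eq_bigr => e _; rewrite /pi; ring.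
have S3 : \sum_e x e * iter T K (g e) set0 >= EOPT - FF.
  rewrite -Phi_sum.
  have := @Phi_mono T (fun Q => EOPT + (-1) * f Q) (fun Q => \sum_e x e * g e Q) _ set0 (sub0set E).
    rewrite Phi_aff mulN1r; apply.
  move=> P PE; rewrite mulN1r; exact: key PE.
have h : 0 <= 1 - aa.
  have e1 : expR (- (1/2)) <= 1 :> R by rewrite expR_le1; lra.
  by have := aa_bounds; lra.
apply: (le_trans _ S1); rewrite S2; by apply: ler_wpM2l.
Qed.

Lemma Phi_add j h1 h2 P :
  iter j K (fun Q => h1 Q + h2 Q) P = iter j K h1 P + iter j K h2 P.
Proof.
elim: j P => [//|j IH] P; rewrite !iterS !KE IH.
under [X in _ + X = _]eq_bigr => e _ do rewrite IH mulrDr.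
by rewrite big_split /=; ring.
Qed.

Lemma Kf : K f = (fun Q => f Q + \sum_e rho e * g e Q).
Proof.
apply: boolp.funext => Q; rewrite KE /g.
under [in RHS]eq_bigr => e _ do rewrite mulrBr.
rewrite sumrB (_ : \sum_e rho e * f Q = (\sum_e rho e) * f Q); last by rewrite mulr_suml.
rewrite /rho0; ring.
Qed.

Lemma boundB : aa * FF <= G.
Proof.
have S1 : \sum_(j < T) \sum_e aa * (rho e * iter j K (g e) set0) <= G.
  apply: ler_sum => j _; apply: ler_sum => e _.
  case eE: (e \in E); last by rewrite rho_E ?eE // pi_E ?eE // !mul0r mulr0.
  have nn := g_nn eE; have an := g_anti eE.
  have [_ nj] := Phi_props j an nn.
  have Ph0 := nj set0 (sub0set E).
  have pe : pi e = (1 - beta) * rho e.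
    rewrite /rho mulrC -mulrA mulVf ?mulr1 //; by rewrite gt_eqF // omb_gt0.
  rewrite (_ : pi e * _ = (1 - beta) ^+ j.+1 * (rho e * iter j K (g e) set0)); last by rewrite pe exprS; ring.
  apply: ler_wpM2r; first exact: mulr_ge0 (rho_ge0 e) Ph0.
  rewrite /aa; apply: ler_wiXn2l; [exact: ltW omb_gt0 | have := beta_gt0; lra | exact: ltn_ord].
have S2 : forall j, \sum_e rho e * iter j K (g e) set0 =
          iter j.+1 K f set0 - iter j K f set0.
  move=> j; rewrite iterSr Kf Phi_add Phi_sum; ring.
apply: (le_trans _ S1); under eq_bigr => j _ do rewrite -mulr_sumr S2.
by rewrite -mulr_sumr (tele (fun j => iter j K f set0)) /= f0 subr0.
Qed.

Lemma final : osbm_ratio R * EOPT <= W T set0.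
Proof.
have hA := boundA; have hB := boundB; have hW := W_ge_G.
have [lo hi] := aa_bounds; have O0 := EOPT_ge0.
have e1 : expR (- (1/2)) <= 1 :> R by rewrite expR_le1; lra.
have e2 : expR (- 1) <= 1 :> R by rewrite expR_le1; lra.
have e3 : 0 < expR (- 1) :> R by apply: expR_gt0.
have P1 : aa * ((1 - aa) * (EOPT - FF)) <= aa * G by apply: ler_wpM2l => //; lra.
have P2 : (1 - aa) * (aa * FF) <= (1 - aa) * G by apply: ler_wpM2l => //; lra.
have HG : aa * (1 - aa) * EOPT <= G by nra.
have r1 : osbm_ratio R <= aa * (1 - aa).
  rewrite /osbm_ratio.
  set c1 := 1 - expR (- (1/2)); set c2 := 1 - expR (-1).
  have h1 : 0 <= c1 by rewrite /c1; lra.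
  have h2 : 0 <= c2 by rewrite /c2; lra.
  have h3 : c2 <= 1 by rewrite /c2; lra.
  have k1 : (1/2) * c1 <= aa * (1 - aa) by apply: ler_pM; rewrite /c1; lra.
  have k2 : (1/2) * c1 * c2 <= (1/2) * c1.
    rewrite -[X in _ <= X]mulr1; apply: ler_wpM2l => //; apply: mulr_ge0 => //; lra.
  lra.
have : osbm_ratio R * EOPT <= aa * (1 - aa) * EOPT by apply: ler_wpM2r.
lra.
Qed.

End Main.

Unset Implicit Arguments.

Theorem theorem1 (R : realType) (U V : finType) (E : {set U * V})
    (T : nat) (f : {set U * V} -> R) :
  (0 < T)%N -> (#|V| <= T)%N -> monotone_submodular_on E f ->
  exists pol : online_policy R U V,
    valid_policy pol /\
    osbm_ratio R * expected_OPT E f T <= expected_ALG E f T pol.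
Proof.
move=> T0 VT fs; exists (pol T fs); split; first exact: pol_valid T0 VT fs.
rewrite /expected_ALG alg_W; exact: final T0 VT fs.
Qed.
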